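(* A square complex matrix $U$ is unitary with all entries in $\mathcal{R}_{12}$ if and only if $U$ can be expressed as a product of one-level operators of type $\zeta_{12}$ and two-level operators of type $X$ and of type $H'$ (of the same dimension as $U$).
   Context: $\zeta_{12}=e^{2\pi i/12}$ and $\mathcal{R}_{12}$ is the smallest subring of $\mathbb{C}$ containing $1/2$ and $\zeta_{12}$. $X=\begin{bmatrix}0&1\\1&0\end{bmatrix}$ and $H'=\frac{1+i}{2}\begin{bmatrix}1&1\\1&-1\end{bmatrix}$. For $c\in\mathbb{C}$ and $0\le j\le m-1$, the one-level operator of type $c$ is the $m\times m$ matrix $c_{[j]}$ equal to the identity except that its $(j,j)$ entry is $c$. For $M\in\mathrm{M}_2(\mathbb{C})$ and $0\le j<j'\le m-1$, the two-level operator of type $M$ is the $m\times m$ matrix $M_{[j,j']}$ equal to the identity except that its entries in positions $(j,j),(j,j'),(j',j),(j',j')$ are $M_{1,1},M_{1,2},M_{2,1},M_{2,2}$ respectively. *)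

(* Defs.v *)
From HB Require Import structures.
From mathcomp Require Import all_boot all_order all_algebra.
From mathcomp Require Import reals.
From mathcomp.real_closed Require Import complex.
Set Implicit Arguments. Unset Strict Implicit. Unset Printing Implicit Defensive.
Import Order.TTheory GRing.Theory Num.Theory.
Local Open Scope ring_scope.

Section Defs.
Variable R : realType.
Local Notation C := R[i].

(* zeta_12 = e^{2 pi i/12} = cos(pi/6) + i sin(pi/6) = sqrt 3/2 + i/2 *)
Definition zeta12 : C := Complex (Num.sqrt 3 / 2) (1 / 2).

(* membership in R_12: the smallest subring of C containing 1/2 and zeta12 *)
Definition in_R12 (x : C) : Prop :=
  forall S : C -> Prop,
    S 1 ->
    (forall a b, S a -> S b -> S (a - b)) ->
    (forall a b, S a -> S b -> S (a * b)) ->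
    S (1 / 2) -> S zeta12 -> S x.

Definition conj_tr (m : nat) (U : 'M[C]_m) : 'M[C]_m := map_mx Num.conj U^T.

Definition unitary (m : nat) (U : 'M[C]_m) : Prop :=
  U *m conj_tr U = 1%:M /\ conj_tr U *m U = 1%:M.

Definition i0 : 'I_2 := Ordinal (isT : (0 < 2)%N).
Definition i1 : 'I_2 := Ordinal (isT : (1 < 2)%N).

Definition Xgate : 'M[C]_2 :=
  \matrix_(a < 2, b < 2) (if a == b then 0 else 1).

Definition Hprime : 'M[C]_2 :=
  \matrix_(a < 2, b < 2)
     ((1 + 'i) / 2 * (if (a == i1) && (b == i1) then -1 else 1)).

Definition one_level (m : nat) (c : C) (j : 'I_m) : 'M[C]_m :=
  \matrix_(a, b) (if a == b then (if a == j then c else 1) else 0).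

Definition two_level (m : nat) (M : 'M[C]_2) (j j' : 'I_m) : 'M[C]_m :=
  \matrix_(a, b)
    (if (a == j) && (b == j) then M i0 i0
     else if (a == j) && (b == j') then M i0 i1
     else if (a == j') && (b == j) then M i1 i0
     else if (a == j') && (b == j') then M i1 i1
     else if a == b then 1 else 0).

Definition generator (m : nat) (G : 'M[C]_m) : Prop :=
  (exists j : 'I_m, G = one_level zeta12 j) \/
  (exists (j j' : 'I_m), (j < j')%N /\
      (G = two_level Xgate j j' \/ G = two_level Hprime j j')).

Definition mx_prod (m : nat) (s : seq 'M[C]_m) : 'M[C]_m := foldr mulmx 1%:M s.
End Defs.

(* Main.v *)
Require Import Defs.
From HB Require Import structures.
From mathcomp Require Import all_boot all_order all_algebra.
From mathcomp Require Import reals.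
From mathcomp.real_closed Require Import complex.
From mathcomp Require Import ring lra zify.
Import GRing.Theory Num.Theory.
Local Open Scope ring_scope.
Set Implicit Arguments. Unset Strict Implicit. Unset Printing Implicit Defensive.

Notation Z4 T := (T * T * T * T)%type.

Definition mul4 {T : nzRingType} (x y : Z4 T) : Z4 T :=
  let: (a, b, c, d) := x in let: (e, f, g, h) := y in
  (a*e - (b*h + c*g + d*f) - d*h,
   a*f + b*e - (c*h + d*g),
   a*g + b*f + c*e + (b*h + c*g + d*f),
   a*h + b*g + c*f + d*e + (c*h + d*g)).
Definition add4 {T : nzRingType} (x y : Z4 T) : Z4 T :=
  let: (a, b, c, d) := x in let: (e, f, g, h) := y in (a+e, b+f, c+g, d+h).
Definition opp4 {T : nzRingType} (x : Z4 T) : Z4 T :=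
  let: (a, b, c, d) := x in (-a, -b, -c, -d).
Definition conj4 {T : nzRingType} (x : Z4 T) : Z4 T :=
  let: (a, b, c, d) := x in (a + c, b, -c, -b - d).
Definition one4 {T : nzRingType} : Z4 T := (1, 0, 0, 0).
Definition zero4 {T : nzRingType} : Z4 T := (0, 0, 0, 0).
Definition cz4 {T : nzRingType} : Z4 T := (0, 1, 0, -1).
Definition dl4 {T : nzRingType} : Z4 T := (1, 0, 0, 1).
Definition db4 {T : nzRingType} : Z4 T := (1, 0, 0, -1).
Definition mi4 {T : nzRingType} : Z4 T := (0, 0, 0, -1).
Definition pow4 {T : nzRingType} (e : nat) : Z4 T := iter e (mul4 cz4) one4.
Definition nrm4 {T : nzRingType} (x : Z4 T) : Z4 T := mul4 x (conj4 x).
Definition cPb (x : Z4 'F_2) : bool :=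
  let: (a, b, c, d) := x in (b == c) && (a + b + d == 0).
Definition red (x : Z4 int) : Z4 'F_2 :=
  let: (a, b, c, d) := x in (a%:~R, b%:~R, c%:~R, d%:~R).

Definition F2s : seq 'F_2 := [:: 0; 1].
Definition allv : seq (Z4 'F_2) :=
  flatten [seq flatten [seq flatten [seq [seq (a, b, c, d) | d <- F2s] | c <- F2s] | b <- F2s] | a <- F2s].
Lemma F2P (a : 'F_2) : a = 0 \/ a = 1.
Proof. by case: a => [[|[|//]] ?]; [left|right]; apply/val_inj. Qed.
Lemma allvP (x : Z4 'F_2) : x \in allv.
Proof.
case: x => [[[a b] c] d].
by case: (F2P a) => ->; case: (F2P b) => ->; case: (F2P c) => ->; case: (F2P d) => ->; vm_compute.
Qed.
Lemma FA x : cPb x -> mul4 db4 x = zero4.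
Proof.
have: all (fun x => cPb x ==> (mul4 db4 x == zero4)) allv by vm_compute.
by move/allP/(_ x (allvP x)) => /implyP H /H /eqP.
Qed.
Lemma FB x : cPb (mul4 dl4 x).
Proof.
have: all (fun x => cPb (mul4 dl4 x)) allv by vm_compute.
by move/allP/(_ x (allvP x)).
Qed.
Lemma FC x : cPb x -> nrm4 x = zero4.
Proof.
have: all (fun x => cPb x ==> (nrm4 x == zero4)) allv by vm_compute.
by move/allP/(_ x (allvP x)) => /implyP H /H /eqP.
Qed.
Lemma FD x : ~~ cPb x -> nrm4 x = (0,0,0,1) \/ nrm4 x = (1,0,0,0).
Proof.
have: all (fun x => cPb x || (nrm4 x == (0,0,0,1)) || (nrm4 x == (1,0,0,0))) allv by vm_compute.
move/allP/(_ x (allvP x)) => H nx; move: H; rewrite (negbTE nx) orFb.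
by case/orP => /eqP; tauto.
Qed.
Lemma FE x y : ~~ cPb x -> ~~ cPb y -> nrm4 x = nrm4 y ->
  exists e, add4 x (opp4 (mul4 (pow4 e) y)) = zero4.
Proof.
have: all (fun x => all (fun y => cPb x || cPb y || (nrm4 x != nrm4 y) ||
  has (fun e => add4 x (opp4 (mul4 (pow4 e) y)) == zero4) (iota 0 12)) allv) allv.
  by vm_compute.
move/allP/(_ x (allvP x))/allP/(_ y (allvP y)).
move=> H nx ny exy; have h : (nrm4 x != nrm4 y) = false by rewrite exy eqxx.
move: H; rewrite (negbTE nx) (negbTE ny) h !orFb.
by case/hasP => e _ /eqP He; exists e.
Qed.

Lemma red_mul x y : red (mul4 x y) = mul4 (red x) (red y).
Proof.
case: x => [[[a b] c] d]; case: y => [[[e f] g] h].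
by rewrite /= !(intrD, intrM, intrN, intrB).
Qed.
Lemma FB2 x : cPb (mul4 db4 x).
Proof.
have: all (fun x => cPb (mul4 db4 x)) allv by vm_compute.
by move/allP/(_ x (allvP x)).
Qed.


Lemma red_add x y : red (add4 x y) = add4 (red x) (red y).
Proof. case: x => [[[a b] c] d]; case: y => [[[e f] g] h]; by rewrite /= !intrD. Qed.
Lemma red_opp x : red (opp4 x) = opp4 (red x).
Proof. case: x => [[[a b] c] d]; by rewrite /= !intrN. Qed.
Lemma red_conj x : red (conj4 x) = conj4 (red x).
Proof. case: x => [[[a b] c] d]; by rewrite /= !(intrD, intrN, intrB). Qed.
Lemma red_nrm x : red (nrm4 x) = nrm4 (red x).
Proof. by rewrite /nrm4 red_mul red_conj. Qed.
Lemma red_cz : red cz4 = cz4.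
Proof. by rewrite /= mulr0z mulr1z mulrN1z. Qed.
Lemma red_pow e : red (pow4 e) = pow4 e.
Proof.
elim: e => [|e IH]; first by rewrite /= mulr0z mulr1z.
by rewrite (_ : pow4 e.+1 = mul4 cz4 (pow4 e)) // red_mul IH red_cz.
Qed.
Lemma red_dl x : red (mul4 dl4 x) = mul4 dl4 (red x).
Proof. by rewrite red_mul /= mulr0z mulr1z. Qed.
Lemma red_db x : red (mul4 db4 x) = mul4 db4 (red x).
Proof. by rewrite red_mul /= mulr0z mulr1z mulrN1z. Qed.

Lemma F2_dvd (a : int) : (a%:~R : 'F_2) = 0 -> (2 %| a)%Z.
Proof. by move=> h; rewrite (dvdz_pcharf (pchar_Fp (isT : prime 2))) h. Qed.


Lemma no_sqrt3 (p q : int) : p * p = 3 * (q * q) -> q = 0.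
Proof.
move=> h; apply/eqP; apply: contraT => q0.
have hn : (`|p| * `|p| = 3 * (`|q| * `|q|))%N.
  by rewrite -!abszM h abszM.
have Q0 : (0 < `|q|)%N by rewrite absz_gt0.
have P0 : (0 < `|p|)%N.
  rewrite absz_gt0; apply/eqP => p0; move: h q0; rewrite p0; nia.
have := congr1 (logn 3) hn.
rewrite lognM // lognM // ?muln_gt0 ?Q0 // lognM // (logn_prime 3 (isT : prime 3)) /=.
lia.
Qed.

Section Main.
Variable R : realType.
Local Notation C := R[i].
Local Notation zz := (zeta12 R).
Local Notation s := (Num.sqrt (3 : R)).

Lemma hs : s * s = 3.
Proof. by rewrite -expr2 sqr_sqrtr // ler0n. Qed.

Lemma cmul (a b c d : R) : Complex a b * Complex c d = Complex (a*c - b*d) (a*d + b*c).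
Proof. by []. Qed.
Lemma cadd (a b c d : R) : Complex a b + Complex c d = Complex (a + c) (b + d).
Proof. by []. Qed.
Lemma copp (a b : R) : - Complex a b = Complex (- a) (- b).
Proof. by []. Qed.
Lemma intC (a : int) : (a%:~R : C) = Complex (a%:~R) 0.
Proof. by rewrite -(rmorph_int (real_complex R)). Qed.

Lemma z2 : zz ^+ 2 = Complex (1/2) (s/2).
Proof. rewrite expr2 /zeta12 cmul; have h := hs; congr Complex; lra. Qed.
Lemma z3 : zz ^+ 3 = 'i.
Proof. rewrite exprS z2 /zeta12 cmul; have h := hs; apply/eqP; rewrite eq_complex /=; apply/andP; split; apply/eqP; lra. Qed.
Lemma z4 : zz ^+ 4 - zz ^+ 2 + 1 = 0.
Proof.
rewrite (exprS _ 3) z3 z2 /zeta12 cmul copp cadd /=.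
have h := hs; apply/eqP; rewrite eq_complex /=; apply/andP; split; apply/eqP; lra.
Qed.
Lemma zconj : Num.conj zz = zz - zz ^+ 3.
Proof.
rewrite z3 /zeta12; apply/eqP; rewrite eq_complex /=; apply/andP; split; apply/eqP; lra.
Qed.
Lemma zconjM : zz * Num.conj zz = 1.
Proof.
rewrite /zeta12 /= cmul; have h := hs; apply/eqP; rewrite eq_complex /=; apply/andP; split; apply/eqP; lra.
Qed.

Definition ev (x : Z4 int) : C :=
  let: (a, b, c, d) := x in a%:~R + b%:~R * zz + c%:~R * zz ^+ 2 + d%:~R * zz ^+ 3.

Lemma evE a b c d : ev (a, b, c, d) = a%:~R + b%:~R * zz + c%:~R * zz ^+ 2 + d%:~R * zz ^+ 3.
Proof. by []. Qed.

Lemma ev_mul x y : ev (mul4 x y) = ev x * ev y.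
Proof.
case: x => [[[a b] c] d]; case: y => [[[e f] g] h] /=.
rewrite !(intrD, intrM, intrN, intrB).
apply/eqP; rewrite -subr_eq0; apply/eqP.
set n4 := (b%:~R * h%:~R + c%:~R * g%:~R + d%:~R * f%:~R : C).
set n5 := (c%:~R * h%:~R + d%:~R * g%:~R : C).
set n6 := (d%:~R * h%:~R : C).
transitivity ((zz ^+ 4 - zz ^+ 2 + 1) * - (n4 + n5 * zz + n6 * (zz ^+ 2 + 1))).
  rewrite /n4 /n5 /n6; ring.
by rewrite z4 mul0r.
Qed.

Lemma ev_add x y : ev (add4 x y) = ev x + ev y.
Proof.
case: x => [[[a b] c] d]; case: y => [[[e f] g] h] /=.
rewrite !intrD; ring.
Qed.
Lemma ev_opp x : ev (opp4 x) = - ev x.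
Proof. case: x => [[[a b] c] d] /=; rewrite !intrN; ring. Qed.
Lemma evC a b c d : ev (a, b, c, d) =
  Complex (a%:~R + c%:~R / 2 + b%:~R * s / 2) (b%:~R / 2 + d%:~R + c%:~R * s / 2).
Proof.
rewrite /= z2 z3 /zeta12 !intC !cmul !cadd; have h := hs.
apply/eqP; rewrite eq_complex /=; apply/andP; split; apply/eqP; lra.
Qed.

Lemma ev_conj x : Num.conj (ev x) = ev (conj4 x).
Proof.
case: x => [[[a b] c] d].
rewrite [conj4 _]/= !evC /= !(intrD, intrN, intrB); have h := hs.
apply/eqP; rewrite eq_complex /=; apply/andP; split; apply/eqP; lra.
Qed.
Lemma ev_one : ev one4 = 1.
Proof. rewrite evE; ring. Qed.
Lemma ev_zero : ev zero4 = 0.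
Proof. rewrite evE; ring. Qed.
Lemma ev_cz : ev cz4 = Num.conj zz.
Proof. rewrite zconj evE; ring. Qed.
Lemma ev_pow e : ev (pow4 e) = Num.conj zz ^+ e.
Proof. elim: e => [|e IH]; first exact: ev_one. by rewrite exprS -IH -ev_cz -ev_mul. Qed.
Lemma ev_dl : ev dl4 = 1 + 'i.
Proof. rewrite evE z3; ring. Qed.
Lemma ev_db : ev db4 = 1 - 'i.
Proof. rewrite evE z3; ring. Qed.
Lemma ev_mi : ev mi4 = - 'i.
Proof. rewrite evE z3; ring. Qed.
Lemma ev_const (k : int) : ev (k, 0, 0, 0) = k%:~R.
Proof. rewrite evE; ring. Qed.

Lemma irr_s (p q : int) : p%:~R + q%:~R * s = 0 -> p = 0 /\ q = 0.
Proof.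
move=> h.
have hq : q = 0.
  apply: (@no_sqrt3 p); apply: (@intr_inj R).
  have e : (p%:~R : R) = - (q%:~R * s) by apply/eqP; rewrite -subr_eq0 opprK h.
  rewrite !intrM e mulrNN mulrACA hs; ring.
split => //; move: h; rewrite hq mul0r addr0 => /eqP; rewrite intr_eq0 => /eqP //.
Qed.

Lemma ev_inj0 x : ev x = 0 -> x = zero4.
Proof.
case: x => [[[a b] c] d]; rewrite evC => h.
have h1 := congr1 (@complex.Re R) h; have h2 := congr1 (@complex.Im R) h.
move: h1 h2 => /= h1 h2.
have [e1 e2] : 2 * a + c = 0 /\ b = 0.
  apply: irr_s; rewrite intrD intrM; lra.
have [e3 e4] : b + 2 * d = 0 /\ c = 0.
  apply: irr_s; rewrite intrD intrM; lra.
rewrite /zero4; congr (_, _, _, _); lia.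
Qed.

Lemma ev_inj x y : ev x = ev y -> x = y.
Proof.
move=> h; have : ev (add4 x (opp4 y)) = 0 by rewrite ev_add ev_opp h subrr.
move/ev_inj0; case: x {h} => [[[a b] c] d]; case: y => [[[e f] g] k] /= [].
move=> h1 h2 h3 h4; congr (_, _, _, _); lia.
Qed.



Lemma red0_half y : red y = zero4 -> exists w, ev y = 2 * ev w.
Proof.
case: y => [[[a b] c] d] [] /F2_dvd ha /F2_dvd hb /F2_dvd hc /F2_dvd hd.
exists ((a %/ 2)%Z, (b %/ 2)%Z, (c %/ 2)%Z, (d %/ 2)%Z).
rewrite !evE -{1}(divzK ha) -{1}(divzK hb) -{1}(divzK hc) -{1}(divzK hd) !intrM; ring.
Qed.

Lemma stepB z : cPb (red z) -> exists w, ev z = (1 + 'i) * ev w.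
Proof.
move/FA; rewrite -red_db => /red0_half [w hw]; exists w.
move: hw; rewrite ev_mul ev_db => hw.
have h2 : (2 : C) != 0 by rewrite pnatr_eq0.
apply: (mulfI h2); rewrite mulrCA -hw mulrA.
have -> : (2 : C) = (1 + 'i) * (1 - 'i).
  rewrite mulrDl mul1r mulrDr mulr1 mulrN -expr2 sqrCi; ring.
by [].
Qed.

Lemma stepB' z w : ev z = (1 + 'i) * ev w -> cPb (red z).
Proof.
rewrite -ev_dl -ev_mul => /ev_inj ->; rewrite red_dl; exact: FB.
Qed.

Lemma R12_sub (x y : C) : in_R12 x -> in_R12 y -> in_R12 (x - y).
Proof. by move=> hx hy S S1 Ss Sm Sh Sz; apply: (Ss); [exact: (hx S S1 Ss Sm Sh Sz)|exact: (hy S S1 Ss Sm Sh Sz)]. Qed.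
Lemma R12_mul (x y : C) : in_R12 x -> in_R12 y -> in_R12 (x * y).
Proof. by move=> hx hy S S1 Ss Sm Sh Sz; apply: (Sm); [exact: (hx S S1 Ss Sm Sh Sz)|exact: (hy S S1 Ss Sm Sh Sz)]. Qed.
Lemma R12_1 : in_R12 (1 : C).
Proof. by move=> S S1. Qed.
Lemma R12_half : in_R12 (1 / 2 : C).
Proof. by move=> S S1 Ss Sm Sh. Qed.
Lemma R12_z : in_R12 zz.
Proof. by move=> S S1 Ss Sm Sh Sz. Qed.
Lemma R12_0 : in_R12 (0 : C).
Proof. by rewrite -(subrr 1); apply: R12_sub; apply: R12_1. Qed.
Lemma R12_opp (x : C) : in_R12 x -> in_R12 (- x).
Proof. by move=> hx; rewrite -sub0r; apply: R12_sub => //; apply: R12_0. Qed.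
Lemma R12_add (x y : C) : in_R12 x -> in_R12 y -> in_R12 (x + y).
Proof. by move=> hx hy; rewrite -(opprK y); apply: R12_sub => //; apply: R12_opp. Qed.
Lemma R12_X (x : C) n : in_R12 x -> in_R12 (x ^+ n).
Proof. by move=> hx; elim: n => [|n IH]; [apply: R12_1|rewrite exprS; apply: R12_mul]. Qed.
Lemma R12_i : in_R12 ('i : C).
Proof. by rewrite -z3; apply: R12_X; apply: R12_z. Qed.
Lemma R12_sum (I : finType) (F : I -> C) : (forall k, in_R12 (F k)) -> in_R12 (\sum_k F k).
Proof.
move=> h; apply: (big_ind (fun x => in_R12 x)) => //; [apply: R12_0|move=> ? ?; apply: R12_add].
Qed.
Lemma R12_conj (x : C) : in_R12 x -> in_R12 (Num.conj x).
Proof.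
move=> hx; apply: (hx (fun y => in_R12 (Num.conj y))).
- by rewrite rmorph1; apply: R12_1.
- by move=> a b ha hb; rewrite rmorphB; apply: R12_sub.
- by move=> a b ha hb; rewrite rmorphM; apply: R12_mul.
- by rewrite rmorphM rmorph1 fmorphV rmorph_nat; apply: R12_half.
- by rewrite zconj; apply: R12_sub; [apply: R12_z|apply: R12_X; apply: R12_z].
Qed.

Definition inD (x : C) := exists w, x = ev w.
Lemma inD_mul x y : inD x -> inD y -> inD (x * y).
Proof. by move=> [a ->] [b ->]; exists (mul4 a b); rewrite ev_mul. Qed.
Lemma inD_i : inD 'i.
Proof. by exists (0, 0, 0, 1); rewrite evE z3; ring. Qed.
Lemma inD_int (k : int) : inD k%:~R.
Proof. by exists (k, 0, 0, 0); rewrite ev_const. Qed.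

Lemma R12_lev (x : C) : in_R12 x -> exists n, inD (2 ^+ n * x).
Proof.
move=> hx; apply: (hx (fun x => exists n, inD (2 ^+ n * x))).
- by exists 0%N; rewrite mul1r; exists one4; rewrite ev_one.
- move=> a b [n ha] [k hb]; exists (n + k)%N.
  have -> : 2 ^+ (n + k) * (a - b) = (2 ^+ k * (2 ^+ n * a)) - 2 ^+ n * (2 ^+ k * b) :> C.
    by rewrite exprD; ring.
  have e2 : forall p, (2 ^+ p : C) = (2 ^+ p : int)%:~R by move=> p; rewrite rmorphXn.
  case: (inD_mul (inD_int (2 ^+ k)) ha) => w1 hw1.
  case: (inD_mul (inD_int (2 ^+ n)) hb) => w2 hw2.
  by exists (add4 w1 (opp4 w2)); rewrite ev_add ev_opp -hw1 -hw2 !e2.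
- move=> a b [n ha] [k hb]; exists (n + k)%N.
  have -> : 2 ^+ (n + k) * (a * b) = (2 ^+ n * a) * (2 ^+ k * b) :> C by rewrite exprD; ring.
  exact: inD_mul.
- by exists 1%N; exists one4; rewrite ev_one expr1 mul1r mulfV // pnatr_eq0.
- by exists 0%N; exists (0, 1, 0, 0); rewrite mul1r evE; ring.
Qed.


Lemma conj_trE n (A : 'M[C]_n) a b : conj_tr A a b = Num.conj (A b a).
Proof. by rewrite !mxE. Qed.

Lemma sum2 (F : 'I_2 -> C) : \sum_k F k = F i0 + F i1.
Proof. by rewrite !big_ord_recl big_ord0 addr0; congr (F _ + F _); apply/val_inj. Qed.

Section Mx.
Variable m : nat.
Implicit Types (A B U : 'M[C]_m) (j : 'I_m) (c : C) (M : 'M[C]_2).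

Lemma ord2P (a : 'I_2) : a = i0 \/ a = i1.
Proof. by case: a => [[|[|//]] ?]; [left|right]; apply/val_inj. Qed.

Lemma one_level_entry c j a b :
  one_level c j a b = if a == b then (if a == j then c else 1) else 0.
Proof. by rewrite mxE. Qed.

Lemma one_levelE c j A a b :
  (one_level c j *m A) a b = (if a == j then c else 1) * A a b.
Proof.
rewrite mxE (bigD1 a) //= big1 ?addr0 => [|k ka]; first by rewrite mxE eqxx.
by rewrite mxE eq_sym (negbTE ka) mul0r.
Qed.

Ltac eqsimp := repeat match goal with
 | H : is_true (?x != ?y) |- context [?x == ?y] => rewrite (negbTE H)
 | H : is_true (?x != ?y) |- context [?y == ?x] => rewrite (eq_sym y x) (negbTE H)
 | |- context [?x == ?x] => rewrite eqxx
 end.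

Lemma two_level_entry M j j' a b : j != j' ->
  two_level M j j' a b =
  if a == j then (if b == j then M i0 i0 else if b == j' then M i0 i1 else 0)
  else if a == j' then (if b == j then M i1 i0 else if b == j' then M i1 i1 else 0)
  else (a == b)%:R.
Proof.
move=> njj; rewrite mxE.
(case: (eqVneq a j) => [e1|naj]; [rewrite ?e1|case: (eqVneq a j') => [e2|naj']; [rewrite ?e2|]]);
(case: (eqVneq b j) => [e3|nbj]; [rewrite ?e3|case: (eqVneq b j') => [e4|nbj']; [rewrite ?e4|]]);
  eqsimp; rewrite /= ?andbF ?andbT //; eqsimp => //.
all: try by case: (a == b).
all: by case: (eqVneq b j').
Qed.


Lemma sum_sel j j' (x y : C) (f : 'I_m -> C) : j != j' ->
  \sum_k (if k == j then x else if k == j' then y else 0) * f k = x * f j + y * f j'.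
Proof.
move=> njj; rewrite (bigD1 j) //= (bigD1 j') /=; last by rewrite eq_sym.
rewrite big1 ?addr0 => [|k /andP [kj' kj]]; last by rewrite (negbTE kj) (negbTE kj') mul0r.
by rewrite eqxx eq_sym (negbTE njj) eqxx.
Qed.

Lemma sum_id a (f : 'I_m -> C) : \sum_k (a == k)%:R * f k = f a.
Proof.
rewrite (bigD1 a) //= big1 ?addr0 => [|k ka]; first by rewrite eqxx mul1r.
by rewrite eq_sym (negbTE ka) mul0r.
Qed.

Lemma two_levelE M j j' A a b : j != j' ->
  (two_level M j j' *m A) a b =
  if a == j then M i0 i0 * A j b + M i0 i1 * A j' b
  else if a == j' then M i1 i0 * A j b + M i1 i1 * A j' b
  else A a b.
Proof.
move=> njj; rewrite mxE.
under eq_bigr => k _ do rewrite two_level_entry //.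
case: (a == j); first exact: sum_sel.
case: (a == j'); first exact: sum_sel.
exact: sum_id.
Qed.


Lemma conj_tr_mul A B : conj_tr (A *m B) = conj_tr B *m conj_tr A.
Proof. by rewrite /conj_tr trmx_mul map_mxM. Qed.

Lemma conj_trK A : conj_tr (conj_tr A) = A.
Proof. by apply/matrixP => a b; rewrite !conj_trE conjCK. Qed.

Lemma conj_tr1 : conj_tr (1%:M : 'M[C]_m) = 1%:M.
Proof. by apply/matrixP => a b; rewrite conj_trE !mxE eq_sym rmorph_nat. Qed.

Lemma unitary_mul A B : unitary A -> unitary B -> unitary (A *m B).
Proof.
move=> [hA1 hA2] [hB1 hB2]; split; rewrite conj_tr_mul.
  by rewrite mulmxA -(mulmxA A) hB1 mulmx1 hA1.
by rewrite mulmxA -(mulmxA _ _ A) hA2 mulmx1 hB2.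
Qed.

Lemma unitary_conj A : unitary A -> unitary (conj_tr A).
Proof. by move=> [h1 h2]; split; rewrite conj_trK. Qed.

Lemma conj_tr_two M j j' : j != j' ->
  conj_tr (two_level M j j') = two_level (conj_tr M) j j'.
Proof.
move=> njj; apply/matrixP => a b; rewrite conj_trE !two_level_entry // !conj_trE.
(case: (eqVneq a j) => [e1|naj]; [rewrite ?e1|case: (eqVneq a j') => [e2|naj']; [rewrite ?e2|]]);
(case: (eqVneq b j) => [e3|nbj]; [rewrite ?e3|case: (eqVneq b j') => [e4|nbj']; [rewrite ?e4|]]);
  eqsimp; rewrite ?rmorph0 ?rmorph_nat //; eqsimp; rewrite ?rmorph0 ?rmorph_nat //.
all: try by case: (eqVneq b j').
all: try by rewrite eq_sym.
Qed.

Lemma two_level_mul M N j j' : j != j' ->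
  two_level M j j' *m two_level N j j' = two_level (M *m N) j j'.
Proof.
move=> njj; apply/matrixP => a b; rewrite two_levelE // !two_level_entry // !mxE !sum2.
(case: (eqVneq a j) => [e1|naj]; [rewrite ?e1|case: (eqVneq a j') => [e2|naj']; [rewrite ?e2|]]);
(case: (eqVneq b j) => [e3|nbj]; [rewrite ?e3|case: (eqVneq b j') => [e4|nbj']; [rewrite ?e4|]]);
  eqsimp; rewrite ?mulr0 ?addr0 //.
all: try by case: (eqVneq b j').
Qed.

Lemma two_level1 j j' : j != j' -> two_level (1%:M : 'M[C]_2) j j' = 1%:M.
Proof.
move=> njj; apply/matrixP => a b; rewrite two_level_entry // !mxE.
(case: (eqVneq a j) => [e1|naj]; [rewrite ?e1|case: (eqVneq a j') => [e2|naj']; [rewrite ?e2|]]);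
(case: (eqVneq b j) => [e3|nbj]; [rewrite ?e3|case: (eqVneq b j') => [e4|nbj']; [rewrite ?e4|]]);
  eqsimp => //.
all: try by case: (eqVneq b j').
Qed.

Lemma conj_tr_one c j : conj_tr (one_level c j) = one_level (Num.conj c) j.
Proof.
apply/matrixP => a b; rewrite conj_trE !one_level_entry eq_sym.
case: (eqVneq a b) => [->|nab]; last by rewrite rmorph0.
by case: (b == j); rewrite ?rmorph1.
Qed.

Lemma one_level_mul c d j : one_level c j *m one_level d j = one_level (c * d) j.
Proof.
apply/matrixP => a b; rewrite one_levelE !one_level_entry.
case: (a == b) => //; last by rewrite mulr0.
by case: (a == j); rewrite ?mul1r.
Qed.

Lemma one_level1 j : one_level (1 : C) j = 1%:M.
Proof. by apply/matrixP => a b; rewrite one_level_entry !mxE; case: (a == b); case: (a == j). Qed.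

Lemma unitary_two M j j' : j != j' -> unitary M -> unitary (two_level M j j').
Proof.
move=> njj [h1 h2]; split; rewrite conj_tr_two // two_level_mul //.
  by rewrite h1 two_level1.
by rewrite h2 two_level1.
Qed.

Lemma unitary_one c j : c * Num.conj c = 1 -> unitary (one_level c j).
Proof.
move=> h; split; rewrite conj_tr_one one_level_mul ?h ?one_level1 //.
by rewrite mulrC h one_level1.
Qed.

End Mx.


Lemma i01 : (i0 == i1) = false. Proof. by []. Qed.
Lemma i10 : (i1 == i0) = false. Proof. by []. Qed.

Lemma hconj : Num.conj ((1 + 'i) / 2 : C) = (1 - 'i) / 2.
Proof. rewrite rmorphM rmorphD rmorph1 fmorphV rmorph_nat; congr ((1 + _) / 2); exact: conjCi. Qed.

Lemma hconjN : Num.conj (- ((1 + 'i) / 2) : C) = - ((1 - 'i) / 2).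
Proof. rewrite rmorphN; congr (- _); exact: hconj. Qed.

Lemma unitaryX : unitary (Xgate R).
Proof.
split; apply/matrixP => a b; rewrite !mxE sum2 !mxE;
  case: (ord2P a) => ->; case: (ord2P b) => ->;
  rewrite ?eqxx ?i01 ?i10 ?rmorph0 ?rmorph1 /=; ring.
Qed.

Lemma unitaryH : unitary (Hprime R).
Proof.
have hi : ('i : C) ^+ 2 = -1 := sqrCi _.
split; apply/matrixP => a b; rewrite !mxE sum2 !mxE;
  case: (ord2P a) => ->; case: (ord2P b) => ->;
  rewrite ?eqxx ?i01 ?i10 /= ?mulr1 ?mulrN1 ?hconj ?hconjN.
all: first [ring | (apply/eqP; rewrite -subr_eq0; apply/eqP;
  transitivity ((('i : C) ^+ 2 + 1) * (- 1 / 2));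
  [by field | by rewrite hi addNr mul0r])].
Qed.


Definition R12mx n (A : 'M[C]_n) := forall a b, in_R12 (A a b).

Lemma R12_mulmx n (A B : 'M[C]_n) : R12mx A -> R12mx B -> R12mx (A *m B).
Proof. move=> hA hB a b; rewrite mxE; apply: R12_sum => k; exact: R12_mul. Qed.
Lemma R12_conjtr n (A : 'M[C]_n) : R12mx A -> R12mx (conj_tr A).
Proof. by move=> h a b; rewrite conj_trE; apply: R12_conj. Qed.
Lemma R12_b (b : bool) : in_R12 (b%:R : C).
Proof. by case: b; [apply: R12_1|apply: R12_0]. Qed.
Lemma R12_1mx n : R12mx (1%:M : 'M[C]_n).
Proof. by move=> a b; rewrite mxE; apply: R12_b. Qed.
Lemma R12_one n c (j : 'I_n) : in_R12 c -> R12mx (one_level c j).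
Proof.
move=> hc a b; rewrite one_level_entry.
case: (a == b); last exact: R12_0.
by case: (a == j) => //; apply: R12_1.
Qed.
Lemma R12_two n M (j j' : 'I_n) : j != j' -> R12mx M -> R12mx (two_level M j j').
Proof.
move=> njj hM a b; rewrite two_level_entry //.
by repeat case: ifP => _; rewrite ?hM //; apply: R12_0 || apply: R12_b.
Qed.
Lemma R12_Xg : R12mx (Xgate R).
Proof. by move=> a b; rewrite mxE; case: ifP => _; [apply: R12_0|apply: R12_1]. Qed.
Lemma R12_h : in_R12 ((1 + 'i) / 2 : C).
Proof.
have -> : ((1 + 'i) / 2 : C) = (1 + 'i) * (1 / 2) by rewrite mul1r.
by apply: R12_mul; [apply: R12_add; [apply: R12_1|apply: R12_i]|apply: R12_half].
Qed.
Lemma R12_Hg : R12mx (Hprime R).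
Proof.
move=> a b; rewrite mxE; apply: R12_mul; first exact: R12_h.
by case: ifP => _; [apply: R12_opp|]; apply: R12_1.
Qed.

Lemma ord_neq n (j j' : 'I_n) : (j < j')%N -> j != j'.
Proof. by move=> h; rewrite -val_eqE /= neq_ltn h. Qed.

Lemma gen_props n (G : 'M[C]_n) : generator G -> unitary G /\ R12mx G.
Proof.
case=> [[j ->]|[j [j' [hjj [->| ->]]]]].
- by split; [apply: unitary_one; apply: zconjM|apply: R12_one; apply: R12_z].
- split; [apply: unitary_two; [exact: ord_neq|exact: unitaryX]|].
  by apply: R12_two; [exact: ord_neq|exact: R12_Xg].
- split; [apply: unitary_two; [exact: ord_neq|exact: unitaryH]|].
  by apply: R12_two; [exact: ord_neq|exact: R12_Hg].
Qed.

Lemma unitary1 n : unitary (1%:M : 'M[C]_n).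
Proof. by split; rewrite conj_tr1 mulmx1. Qed.

Lemma prod_props n (s : seq 'M[C]_n) : (forall G, G \in s -> generator G) ->
  unitary (mx_prod s) /\ R12mx (mx_prod s).
Proof.
elim: s => [|G s IH] hs; first by split; [apply: unitary1|apply: R12_1mx].
have [hG1 hG2] := gen_props (hs G (mem_head _ _)).
have [h1 h2] := IH (fun H hH => hs H (mem_behead (hH : H \in behead (G :: s)))).
by split; [apply: unitary_mul|apply: R12_mulmx].
Qed.


Lemma cjM (x y : C) : Num.conj (x * y) = Num.conj x * Num.conj y. Proof. exact: rmorphM. Qed.
Lemma cjD (x y : C) : Num.conj (x + y) = Num.conj x + Num.conj y. Proof. exact: rmorphD. Qed.
Lemma cjX (x : C) n : Num.conj (x ^+ n) = Num.conj x ^+ n. Proof. exact: rmorphXn. Qed.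
Lemma cj1 : Num.conj (1 : C) = 1. Proof. exact: rmorph1. Qed.
Lemma cj0 : Num.conj (0 : C) = 0. Proof. exact: rmorph0. Qed.
Lemma cji : Num.conj ('i : C) = - 'i. Proof. exact: conjCi. Qed.

Lemma dl_neq0 : (1 + 'i : C) != 0.
Proof.
apply/eqP => /(congr1 (@complex.Re R)) /= /eqP.
by rewrite addr0 oner_eq0.
Qed.

Lemma dlX n : (1 + 'i : C) ^+ n * Num.conj ((1 + 'i) ^+ n) = 2 ^+ n.
Proof.
rewrite cjX -exprMn cjD cj1 cji; congr (_ ^+ n).
have hi : ('i : C) ^+ 2 = -1 := sqrCi _.
transitivity (1 - ('i : C) ^+ 2); first ring.
by rewrite hi; ring.
Qed.

Lemma intr_sum (T : nzRingType) n (F : 'I_n -> int) :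
  ((\sum_j F j)%:~R : T) = \sum_j (F j)%:~R.
Proof. exact: (big_morph _ (@intrD T) (mulr0z 1)). Qed.

Lemma evP x : ev x = x.1.1.1%:~R + x.1.1.2%:~R * zz + x.1.2%:~R * zz ^+ 2 + x.2%:~R * zz ^+ 3.
Proof. by case: x => [[[a b] c] d]. Qed.

Lemma ev_sum n (F : 'I_n -> Z4 int) : \sum_j ev (F j) =
  ev (\sum_j (F j).1.1.1, \sum_j (F j).1.1.2, \sum_j (F j).1.2, \sum_j (F j).2).
Proof.
rewrite evE; under eq_bigr do rewrite evP.
by rewrite !big_split /= -!mulr_suml !intr_sum.
Qed.

Lemma redP y : red y = (y.1.1.1%:~R, y.1.1.2%:~R, y.1.2%:~R, y.2%:~R).
Proof. by case: y => [[[a b] c] d]. Qed.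

Definition Qf (x : Z4 int) : int :=
  let: (a, b, c, d) := x in a * a + b * b + c * c + d * d + a * c + b * d.

Lemma nrmQ x : 2 * (nrm4 x).1.1.1 + (nrm4 x).1.2 = 2 * Qf x.
Proof. case: x => [[[a b] c] d] /=; ring. Qed.

Lemma Q4 (a b c d : int) : 4 * (a * a + b * b + c * c + d * d + a * c + b * d) =
  (2 * a + c) * (2 * a + c) + 3 * (c * c) + (2 * b + d) * (2 * b + d) + 3 * (d * d).
Proof. ring. Qed.

Lemma Qf_ge0 x : 0 <= Qf x.
Proof.
case: x => [[[a b] c] d] /=; have := Q4 a b c d.
have := sqr_ge0 (2 * a + c); have := sqr_ge0 c; have := sqr_ge0 (2 * b + d); have := sqr_ge0 d.
rewrite !expr2; lia.
Qed.

Lemma Qf0 x : Qf x = 0 -> x = zero4.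
Proof.
case: x => [[[a b] c] d] /= h; have := Q4 a b c d; rewrite h.
have := sqr_ge0 (2 * a + c); have := sqr_ge0 c; have := sqr_ge0 (2 * b + d); have := sqr_ge0 d.
rewrite !expr2 => h1 h2 h3 h4 h5.
have c0 : c * c = 0 by lia.
have d0 : d * d = 0 by lia.
have e1 : (2 * a + c) * (2 * a + c) = 0 by lia.
have e2 : (2 * b + d) * (2 * b + d) = 0 by lia.
have sq0 : forall y : int, y * y = 0 -> y = 0.
  by move=> y hy; apply/eqP; rewrite -[y == 0]orbb -mulf_eq0; apply/eqP.
move: (sq0 _ c0) (sq0 _ d0) (sq0 _ e1) (sq0 _ e2) => hc hd he1 he2.
rewrite /zero4; congr (_, _, _, _); lia.
Qed.

Definition l3 : seq int := [:: -1; 0; 1].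
Lemma bnd4 (y : int) : y * y <= 4 -> -2 <= y <= 2.
Proof. move=> h; apply/andP; split; nia. Qed.
Lemma bnd1 (y : int) : y * y <= 1 -> -1 <= y <= 1.
Proof. move=> h; apply/andP; split; nia. Qed.

Lemma Qf1 x : Qf x = 1 -> exists e, mul4 (pow4 e) x = one4.
Proof.
case: x => [[[a b] c] d] /= h; have := Q4 a b c d; rewrite h.
have := sqr_ge0 (2 * a + c); have := sqr_ge0 c; have := sqr_ge0 (2 * b + d); have := sqr_ge0 d.
rewrite !expr2 => h1 h2 h3 h4 h5.
have /bnd1 /andP [c1 c2] : c * c <= 1 by lia.
have /bnd1 /andP [d1 d2] : d * d <= 1 by lia.
have /bnd4 /andP [e1 e2] : (2 * a + c) * (2 * a + c) <= 4 by lia.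
have /bnd4 /andP [f1 f2] : (2 * b + d) * (2 * b + d) <= 4 by lia.
have mem3 : forall y : int, -1 <= y <= 1 -> y \in l3.
  move=> y /andP [y1 y2]; rewrite !inE; lia.
have ha : a \in l3 by apply: mem3; lia.
have hb : b \in l3 by apply: mem3; lia.
have hc : c \in l3 by apply: mem3; lia.
have hd : d \in l3 by apply: mem3; lia.
have : all (fun a => all (fun b => all (fun c => all (fun d =>
   (Qf (a, b, c, d) != 1) || has (fun e => mul4 (pow4 e) (a, b, c, d) == one4) (iota 0 12))
   l3) l3) l3) l3 by vm_compute.
move/allP/(_ a ha)/allP/(_ b hb)/allP/(_ c hc)/allP/(_ d hd).
have -> : (Qf (a, b, c, d) != 1) = false by rewrite /= h eqxx.
by rewrite orFb => /hasP [e _ /eqP he]; exists e.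
Qed.


Section Rev.
Variable m : nat.
Implicit Types (U : 'M[C]_m).

Definition invt (t : nat) U :=
  [/\ unitary U, R12mx U & forall a (b : 'I_m), (b < t)%N -> U a b = (a == b)%:R].
Definition Good U := exists s, (forall G, G \in s -> generator G) /\ U = mx_prod s.

Lemma good_back G U : generator G -> Good (conj_tr G *m U) -> Good U.
Proof.
move=> hG [s [hs e]]; exists (G :: s); split.
  by move=> H; rewrite inE => /orP [/eqP ->|]; [|apply: hs].
have [[h1 _] _] := gen_props hG.
by rewrite /= -e mulmxA h1 mul1mx.
Qed.

Definition genA (t : nat) (G : 'M[C]_m) :=
  (exists j : 'I_m, (t <= j)%N /\ G = one_level zz j) \/
  (exists j j' : 'I_m, [/\ (t <= j)%N, (j < j')%N &
     (G = two_level (Xgate R) j j' \/ G = two_level (Hprime R) j j')]).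

Lemma genA_gen t G : genA t G -> generator G.
Proof.
case=> [[j [_ ->]]|[j [j' [_ h e]]]]; [left; exists j|right; exists j, j'] => //.
Qed.

Lemma col_two M j j' U a b : j != j' -> U j b = 0 -> U j' b = 0 ->
  (two_level M j j' *m U) a b = U a b.
Proof.
move=> njj h1 h2; rewrite two_levelE // h1 h2 !mulr0 addr0.
case: (eqVneq a j) => [->|_]; first by rewrite h1.
by case: (eqVneq a j') => [->|_]; first by rewrite h2.
Qed.

Lemma inv_back t G U : genA t G -> invt t U -> invt t (conj_tr G *m U).
Proof.
move=> hG [hU1 hU2 hU3].
have [hG1 hG2] := gen_props (genA_gen hG).
split; [by apply: unitary_mul => //; apply: unitary_conj|
        by apply: R12_mulmx => //; apply: R12_conjtr|].
move=> a b hb.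
case: hG => [[j [hj ->]]|[j [j' [hj hjj' hG]]]].
  rewrite conj_tr_one one_levelE hU3 //.
  case: (eqVneq a j) => [->|_]; last by rewrite mul1r.
  have -> : (j == b) = false by apply/negbTE; rewrite eq_sym ord_neq // (leq_trans hb hj).
  by rewrite mulr0.
have njj := ord_neq hjj'.
have jb : (j == b) = false by apply/negbTE; rewrite eq_sym ord_neq // (leq_trans hb hj).
have j'b : (j' == b) = false.
  by apply/negbTE; rewrite eq_sym ord_neq // (leq_trans hb (leq_trans hj (ltnW hjj'))).
have [M ->] : exists M, conj_tr G = two_level M j j'.
  by case: hG => ->; rewrite conj_tr_two //; eexists.
by rewrite col_two // ?hU3 // ?jb ?j'b.
Qed.

Lemma rows_zero t U (j c : 'I_m) : invt t U -> (j < t)%N -> c != j -> U j c = 0.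
Proof.
move=> [[hU1 _] _ hU3] hj ncj.
have hjj : U j j = 1 by rewrite hU3 // eqxx.
have := congr1 (fun A : 'M[C]_m => A j j) hU1; rewrite !mxE eqxx /=.
rewrite (bigD1 j) //= !mxE hjj rmorph1 mulr1 => /(congr1 (fun x => x - 1)); rewrite addrC addrK subrr => h.
have hpos : forall k, k != j -> 0 <= U j k * conj_tr U k j.
  by move=> k _; rewrite conj_trE; exact: mul_conjC_ge0.
have := psumr_eq0P hpos h ncj; rewrite conj_trE => hc.
by apply/eqP; rewrite -mul_conjC_eq0 hc.
Qed.



Lemma pow_step t (j : 'I_m) e U : (t <= j)%N -> invt t U ->
  invt t (one_level (Num.conj zz ^+ e) j *m U) /\
  (Good (one_level (Num.conj zz ^+ e) j *m U) -> Good U).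
Proof.
move=> hj hU; elim: e => [|e [IH1 IH2]].
  by rewrite expr0 one_level1 mul1mx.
have gA : genA t (one_level zz j) by left; exists j.
have -> : one_level (Num.conj zz ^+ e.+1) j *m U =
    conj_tr (one_level zz j) *m (one_level (Num.conj zz ^+ e) j *m U).
  by rewrite conj_tr_one mulmxA one_level_mul exprS.
split; first exact: inv_back.
by move=> /(good_back (genA_gen gA)); apply: IH2.
Qed.

Lemma conj_trX : conj_tr (Xgate R) = Xgate R.
Proof.
apply/matrixP => a b; rewrite conj_trE !mxE eq_sym.
by case: (a == b); rewrite ?cj0 ?cj1.
Qed.

Lemma Xg00 : Xgate R i0 i0 = 0. Proof. by rewrite mxE. Qed.
Lemma Xg01 : Xgate R i0 i1 = 1. Proof. by rewrite mxE. Qed.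
Lemma Xg10 : Xgate R i1 i0 = 1. Proof. by rewrite mxE. Qed.
Lemma Xg11 : Xgate R i1 i1 = 0. Proof. by rewrite mxE. Qed.
Lemma Hc00 : conj_tr (Hprime R) i0 i0 = (1 - 'i) / 2.
Proof. by rewrite conj_trE mxE /= mulr1 hconj. Qed.
Lemma Hc01 : conj_tr (Hprime R) i0 i1 = (1 - 'i) / 2.
Proof. by rewrite conj_trE mxE /= mulr1 hconj. Qed.
Lemma Hc10 : conj_tr (Hprime R) i1 i0 = (1 - 'i) / 2.
Proof. by rewrite conj_trE mxE /= mulr1 hconj. Qed.
Lemma Hc11 : conj_tr (Hprime R) i1 i1 = - ((1 - 'i) / 2).
Proof. by rewrite conj_trE mxE /= mulrN1 hconjN. Qed.

Section Col.
Variable t : 'I_m.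
Hypothesis IHt : forall U, invt t.+1 U -> Good U.
Local Notation dl := (1 + 'i : C).

Lemma sumN k U z : invt t U -> (forall j, dl ^+ k * U j t = ev (z j)) ->
  \sum_j ev (nrm4 (z j)) = 2 ^+ k.
Proof.
move=> [[_ hU2] _ _] hz.
have h1 : \sum_j U j t * Num.conj (U j t) = 1.
  have := congr1 (fun A : 'M[C]_m => A t t) hU2; rewrite !mxE eqxx => h.
  rewrite [RHS](_ : 1 = true%:R) // -h.
  by apply: eq_bigr => j _; rewrite conj_trE mulrC.
under eq_bigr => j _ do rewrite /nrm4 ev_mul -ev_conj -hz cjM mulrACA.
by rewrite -mulr_sumr h1 mulr1 dlX.
Qed.

Lemma bad_ge k U z j : invt t U -> (forall j, dl ^+ k * U j t = ev (z j)) ->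
  ~~ cPb (red (z j)) -> (t <= j)%N.
Proof.
move=> hU hz hb; rewrite leqNgt; apply/negP => hjt.
have : U j t = 0 by apply: (rows_zero hU hjt); rewrite eq_sym ord_neq.
move=> h0; move: (hz j); rewrite h0 mulr0 => /esym; rewrite -ev_zero => /ev_inj hzj.
by move: hb; rewrite hzj.
Qed.


Lemma final_step U1 e : invt t U1 ->
  (forall a, a != t -> U1 a t = 0) -> Num.conj zz ^+ e * U1 t t = 1 -> Good U1.
Proof.
move=> hU1 h0 h1.
have [hi hg] := pow_step e (leqnn t) hU1.
apply: hg; apply: IHt.
case: hi => [u1 u2 u3]; split => // a b hb.
rewrite ltnS leq_eqVlt in hb; case/orP: hb => [/eqP hbt|hbt]; last exact: u3.
have -> : b = t by apply/val_inj.
rewrite one_levelE.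
case: (eqVneq a t) => [->|nat]; first by rewrite /= h1.
by rewrite mul1r h0.
Qed.

Lemma colC U z : invt t U -> (forall j, U j t = ev (z j)) -> Good U.
Proof.
move=> hU hz.
have hs := @sumN 0 U z hU (fun j => etrans (mul1r _) (hz j)).
move: hs; rewrite ev_sum expr0 -ev_one => /ev_inj [e0 e1 e2 e3].
have hQ : \sum_j Qf (z j) = 1.
  have : 2 * \sum_j Qf (z j) = 2.
    rewrite mulr_sumr; under eq_bigr do rewrite -nrmQ.
    by rewrite big_split /= -mulr_sumr e0 e2.
  lia.
have [j0 hj0] : exists j0, Qf (z j0) != 0.
  case: (pickP (fun j => Qf (z j) != 0)) => [j0 hj0|h0]; first by exists j0.
  move: hQ; rewrite big1 // => j _; by apply/eqP; move: (h0 j) => /negbFE.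
move: hQ; rewrite (bigD1 j0) //= => hQ.
have hge := Qf_ge0 (z j0).
move: hQ; set S := (X in _ + X = 1) => hQ.
have hrest : 0 <= S by apply: sumr_ge0 => j _; apply: Qf_ge0.
have q1 : Qf (z j0) = 1 by move: hj0; lia.
have q0 : S = 0 by lia.
have hz0 : forall j, j != j0 -> U j t = 0.
  move=> j nj; rewrite hz (Qf0 (psumr_eq0P (fun j _ => Qf_ge0 (z j)) q0 nj)).
  exact: ev_zero.
have [e he] := Qf1 q1.
have hU0 : Num.conj zz ^+ e * U j0 t = 1 by rewrite hz -ev_pow -ev_mul he ev_one.
have hj0t : (t <= j0)%N.
  rewrite leqNgt; apply/negP => hlt.
  have : U j0 t = 0 by apply: (rows_zero hU hlt); rewrite eq_sym ord_neq.
  rewrite hz -ev_zero => /ev_inj hzz; by move: q1; rewrite hzz.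
case: (eqVneq j0 t) => [ej|nj0t].
  apply: (@final_step U e hU); last by move: hU0; rewrite ej.
  by move=> a; rewrite -{1}ej; apply: hz0.
have tj0 : (t < j0)%N.
  rewrite ltn_neqAle hj0t andbT; apply/eqP => h.
  by move: nj0t; rewrite (val_inj h) eqxx.
have gA : genA t (two_level (Xgate R) t j0) by right; exists t, j0; split => //; left.
have ntj : t != j0 by rewrite ord_neq.
set U1 := conj_tr (two_level (Xgate R) t j0) *m U.
have hU1 : invt t U1 := inv_back gA hU.
apply: (good_back (genA_gen gA)).
have E1 : forall a, U1 a t = if a == t then U j0 t else if a == j0 then U t t else U a t.
  move=> a; rewrite /U1 conj_tr_two // conj_trX two_levelE // Xg00 Xg01 Xg10 Xg11.
  by rewrite !mul0r !mul1r add0r addr0.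
apply: (@final_step U1 e hU1).
  move=> a nat; rewrite E1 (negbTE nat).
  case: (eqVneq a j0) => [_|naj]; first by apply: hz0; rewrite eq_sym.
  exact: hz0.
by rewrite E1 eqxx.
Qed.


Lemma stepBall k U z : (forall j, dl ^+ k.+1 * U j t = ev (z j)) ->
  (forall j, cPb (red (z j))) -> exists z', forall j, dl ^+ k * U j t = ev (z' j).
Proof.
move=> hz hc.
have H : forall j, exists w, dl ^+ k * U j t = ev w.
  move=> j; have [w hw] := stepB (hc j); exists w.
  apply: (mulfI dl_neq0); by rewrite mulrA -exprS hz hw.
by case: (@fin_all_exists _ (fun=> Z4 int) (fun j w => dl ^+ k * U j t = ev w) H) => z' h; exists z'.
Qed.

Lemma Hstep k U1 (p q : 'I_m) (zf : 'I_m -> Z4 int) w1 w2 :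
  (t <= p)%N -> (p < q)%N -> invt t U1 ->
  (forall a, a != p -> a != q -> dl ^+ k.+1 * U1 a t = ev (zf a)) ->
  dl ^+ k.+1 * (U1 p t + U1 q t) = 2 * ev w1 ->
  dl ^+ k.+1 * (U1 p t - U1 q t) = 2 * ev w2 ->
  [/\ invt t (conj_tr (two_level (Hprime R) p q) *m U1),
      (Good (conj_tr (two_level (Hprime R) p q) *m U1) -> Good U1) &
      forall a, dl ^+ k.+1 * (conj_tr (two_level (Hprime R) p q) *m U1) a t =
        ev (if a == p then mul4 db4 w1 else if a == q then mul4 db4 w2 else zf a)].
Proof.
move=> hp hpq hU1 hzf h1 h2.
have gA : genA t (two_level (Hprime R) p q) by right; exists p, q; split => //; right.
split; [exact: (inv_back gA hU1)|move=> hg; exact: (good_back (genA_gen gA) hg)|].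
have npq := ord_neq hpq.
move=> a; rewrite conj_tr_two // two_levelE // Hc00 Hc01 Hc10 Hc11.
have hh : forall w, (1 - 'i) / 2 * (2 * ev w) = ev (mul4 db4 w).
  by move=> w; rewrite ev_mul ev_db; field.
case: (eqVneq a p) => [_|nap].
  by rewrite -hh -h1; ring.
case: (eqVneq a q) => [_|naq]; last exact: hzf.
by rewrite -hh -h2; ring.
Qed.


Definition bad (z : 'I_m -> Z4 int) := [pred j | ~~ cPb (red (z j))].

Lemma bad_dec z (p q j : 'I_m) v1 v2 : j \in bad z -> (j == p) || (j == q) ->
  (#|bad (fun a => if a == p then mul4 db4 v1 else if a == q then mul4 db4 v2 else z a)|
    < #|bad z|)%N.
Proof.
move=> hj hjpq; apply: proper_card; apply/properP; split.
  apply/subsetP => a; rewrite !inE.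
  case: ifP => _; first by rewrite red_db FB2.
  by case: ifP => _ //; rewrite red_db FB2.
exists j => //; rewrite !inE negbK.
case: ifP => hjp; first by rewrite red_db FB2.
by move: hjpq; rewrite hjp /= => ->; rewrite red_db FB2.
Qed.

Lemma stepA_fin k U U1 z (p q j : 'I_m) w1 w2 :
  (t <= p)%N -> (p < q)%N -> invt t U1 -> (Good U1 -> Good U) ->
  (forall a, a != p -> a != q -> dl ^+ k.+1 * U1 a t = ev (z a)) ->
  dl ^+ k.+1 * (U1 p t + U1 q t) = 2 * ev w1 ->
  dl ^+ k.+1 * (U1 p t - U1 q t) = 2 * ev w2 ->
  j \in bad z -> (j == p) || (j == q) ->
  exists U2 z2, [/\ invt t U2, (Good U2 -> Good U),
    (forall a, dl ^+ k.+1 * U2 a t = ev (z2 a)) & (#|bad z2| < #|bad z|)%N].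
Proof.
move=> hp hpq hU1 hg1 hz h1 h2 hj hjpq.
have [i2 g2 l2] := Hstep hp hpq hU1 hz h1 h2.
eexists; eexists; split; [exact: i2|by move=> /g2 /hg1|exact: l2|].
exact: (bad_dec _ _ hj hjpq).
Qed.

Lemma pick_pair (P : pred 'I_m) j : j \in P -> (2 %| #|P|)%N -> exists2 j', j' \in P & j' != j.
Proof.
move=> hj h2; have := cardD1 j P; rewrite hj => hc.
case E: #|[predD1 P & j]| => [|n]; first by move: h2; rewrite hc E.
have /card_gt0P [j' hj'] : (0 < #|[predD1 P & j]|)%N by rewrite E.
by move: hj'; rewrite !inE => /andP [nj hP]; exists j'.
Qed.

Lemma count_pred (P : pred 'I_m) : (\sum_j ((j \in P) : nat) = #|P|)%N.
Proof. by rewrite -sum1_card [RHS]big_mkcond /=; apply: eq_bigr => j _; case: (j \in P). Qed.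

Lemma F2_2 : ((2 : int)%:~R : 'F_2) = 0.
Proof. by apply/eqP; vm_compute. Qed.

Lemma even_class (z : 'I_m -> Z4 int) (f : Z4 'F_2 -> 'F_2) (P : pred 'I_m) :
  (forall j, f (nrm4 (red (z j))) = (j \in P)%:R) ->
  \sum_j f (nrm4 (red (z j))) = 0 -> (2 %| #|P|)%N.
Proof.
move=> hf hs; rewrite (dvdn_pcharf (pchar_Fp (isT : prime 2))) -count_pred natr_sum.
by apply/eqP; rewrite -[RHS]hs; apply: eq_bigr => j _; rewrite hf.
Qed.


Lemma two_int p : (2 ^+ p : C) = ((2 ^+ p : int))%:~R.
Proof. by rewrite rmorphXn. Qed.

Lemma stepA k U z : invt t U -> (forall j, dl ^+ k.+1 * U j t = ev (z j)) ->
  (0 < #|bad z|)%N ->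
  exists U2 z2, [/\ invt t U2, (Good U2 -> Good U),
    (forall a, dl ^+ k.+1 * U2 a t = ev (z2 a)) & (#|bad z2| < #|bad z|)%N].
Proof.
move=> hU hz hpos.
have hs := sumN hU hz.
have [s0 s1 s2 s3] : [/\ \sum_j (nrm4 (z j)).1.1.1 = 2 ^+ k.+1, \sum_j (nrm4 (z j)).1.1.2 = 0,
    \sum_j (nrm4 (z j)).1.2 = 0 & \sum_j (nrm4 (z j)).2 = 0].
  move: hs; rewrite ev_sum two_int -ev_const.
  by move/ev_inj => [-> -> -> ->].
set A := [pred j | ~~ cPb (red (z j)) && (nrm4 (red (z j)) == (0, 0, 0, 1))].
set B := [pred j | ~~ cPb (red (z j)) && (nrm4 (red (z j)) == (1, 0, 0, 0))].
have hA : (2 %| #|A|)%N.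
  apply: (@even_class z (fun v => v.2)).
    move=> j; rewrite inE; case hc: (cPb (red (z j))) => /=; first by rewrite (FC hc).
    by case: (FD (negbT hc)) => ->; vm_compute.
  under eq_bigr do rewrite -red_nrm redP /=.
  by rewrite -intr_sum s3 mulr0z.
have hB : (2 %| #|B|)%N.
  apply: (@even_class z (fun v => v.1.1.1)).
    move=> j; rewrite inE; case hc: (cPb (red (z j))) => /=; first by rewrite (FC hc).
    by case: (FD (negbT hc)) => ->; vm_compute.
  under eq_bigr do rewrite -red_nrm redP /=.
  by rewrite -intr_sum s0 exprS intrM F2_2 mul0r.
have /card_gt0P [j hj] := hpos.
have [P [hjP hP2 hPbad hPeq]] : exists P : pred 'I_m, [/\ j \in P, (2 %| #|P|)%N,
    forall a, a \in P -> a \in bad z & forall a, a \in P -> nrm4 (red (z a)) = nrm4 (red (z j))].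
  case: (FD hj) => hN; [exists A|exists B]; split; try rewrite /A; try rewrite /B;
  first [by rewrite inE hN eqxx andbT; exact: hj | assumption
    | by move=> a; rewrite inE => /andP [h _]; exact: h
    | by move=> a; rewrite inE hN => /andP [_ /eqP ->]].
have [j' hj'P nj'j] := pick_pair hjP hP2.
have hj' := hPbad j' hj'P; have hN := hPeq j' hj'P.
have [e he] := FE hj hj' (esym hN).
have [w hw] : exists w, ev (z j) = 2 * ev w + Num.conj zz ^+ e * ev (z j').
  have : red (add4 (z j) (opp4 (mul4 (pow4 e) (z j')))) = zero4.
    by rewrite red_add red_opp red_mul red_pow.
  move/red0_half => [w hw]; exists w; rewrite -hw ev_add ev_opp ev_mul ev_pow; ring.
have tj := bad_ge hU hz hj; have tj' := bad_ge hU hz hj'.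
have [hU1 hg1] := pow_step e tj' hU.
set U1 := one_level (Num.conj zz ^+ e) j' *m U in hU1 hg1.
have E1 : forall a, dl ^+ k.+1 * U1 a t =
    if a == j' then Num.conj zz ^+ e * ev (z j') else ev (z a).
  move=> a; rewrite /U1 one_levelE -hz; case: (eqVneq a j') => [->|_]; last by rewrite mul1r.
  by rewrite mulrCA.
have njj' : (j == j') = false by rewrite eq_sym (negbTE nj'j).
set y := mul4 (pow4 e) (z j').
have ey : ev y = Num.conj zz ^+ e * ev (z j') by rewrite /y ev_mul ev_pow.
have hp : dl ^+ k.+1 * (U1 j t + U1 j' t) = 2 * ev (add4 w y).
  by rewrite mulrDr !E1 njj' eqxx hw ev_add ey; ring.
have hm : dl ^+ k.+1 * (U1 j t - U1 j' t) = 2 * ev w.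
  by rewrite mulrBr !E1 njj' eqxx hw; ring.
have hp' : dl ^+ k.+1 * (U1 j' t + U1 j t) = 2 * ev (add4 w y).
  by rewrite [U1 j' t + _]addrC hp.
have hm' : dl ^+ k.+1 * (U1 j' t - U1 j t) = 2 * ev (opp4 w).
  by rewrite -opprB mulrN hm ev_opp mulrN.
have hzf : forall a, a != j -> a != j' -> dl ^+ k.+1 * U1 a t = ev (z a).
  by move=> a _ naj'; rewrite E1 (negbTE naj').
case: (ltngtP j j') => hjj'.
- apply: (@stepA_fin k U U1 z j j' j _ _ tj hjj' hU1 hg1 _ hp hm hj); last by rewrite eqxx.
  exact: hzf.
- apply: (@stepA_fin k U U1 z j' j j _ _ tj' hjj' hU1 hg1 _ hp' hm' hj); last by rewrite eqxx orbT.
  by move=> a h1 h2; apply: hzf.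
- by move: nj'j; rewrite (val_inj hjj') eqxx.
Qed.


Lemma colk k : forall U z, invt t U -> (forall j, dl ^+ k * U j t = ev (z j)) -> Good U.
Proof.
elim: k => [|k IHk] U z hU hz.
  by apply: (@colC U z hU) => j; rewrite -hz expr0 mul1r.
suff H : forall n U z, (#|bad z| <= n)%N -> invt t U ->
    (forall j, dl ^+ k.+1 * U j t = ev (z j)) -> Good U.
  exact: (H _ U z (leqnn _) hU hz).
have allgood : forall U z, (#|bad z| = 0)%N -> invt t U ->
    (forall j, dl ^+ k.+1 * U j t = ev (z j)) -> Good U.
  move=> U' z' h0 hU' hz'.
  have hall : forall j, cPb (red (z' j)).
    move=> j; apply/negPn/negP => hb.
    have : (0 < #|bad z'|)%N by apply/card_gt0P; exists j.
    by rewrite h0.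
  have [z'' hz''] := stepBall hz' hall.
  exact: (IHk U' z'' hU' hz'').
elim=> [|n IHn] {U z hU hz} U z hn hU hz.
  by apply: (allgood U z) => //; apply/eqP; rewrite -leqn0.
case: (posnP #|bad z|) => [h0|hpos]; first exact: (allgood U z).
have [U2 [z2 [hU2 hg hz2 hc]]] := stepA hU hz hpos.
apply: hg; apply: (IHn U2 z2 _ hU2 hz2).
by rewrite -ltnS (leq_trans hc hn).
Qed.

Lemma inD_iX N : inD ('i ^+ N).
Proof.
elim: N => [|N IH]; first by exists one4; rewrite ev_one expr0.
by rewrite exprS; apply: inD_mul => //; apply: inD_i.
Qed.

Lemma lev0 U : R12mx U -> exists k z, forall j, dl ^+ k * U j t = ev (z j).
Proof.
move=> hR.
have H : forall j, exists n, inD (2 ^+ n * U j t) by move=> j; apply: R12_lev.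
case: (@fin_all_exists _ (fun=> nat) (fun j n => inD (2 ^+ n * U j t)) H) => nf hnf.
set N := (\max_j nf j)%N.
have H2 : forall j, exists w, dl ^+ (N + N) * U j t = ev w.
  move=> j.
  have -> : dl ^+ (N + N) * U j t = 'i ^+ N * ((2 ^+ (N - nf j) : int)%:~R * (2 ^+ nf j * U j t)).
    have e2 : (2 ^+ (N - nf j) : C) * 2 ^+ nf j = 2 ^+ N.
      by rewrite -exprD subnK // leq_bigmax.
    have e1 : dl ^+ (N + N) = 'i ^+ N * 2 ^+ N.
      rewrite exprD -exprMn.
      have -> : dl * dl = 2 * 'i.
        have hi : ('i : C) ^+ 2 = -1 := sqrCi _.
        transitivity (1 + 2 * 'i + ('i : C) ^+ 2); first ring.
        by rewrite hi; ring.
      by rewrite exprMn mulrC.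
    by rewrite -two_int e1 [2 ^+ (N - nf j) * _]mulrA e2 mulrA.
  apply: inD_mul; first exact: inD_iX.
  by apply: inD_mul => //; apply: inD_int.
case: (@fin_all_exists _ (fun=> Z4 int) (fun j w => dl ^+ (N + N) * U j t = ev w) H2) => z hz.
by exists (N + N)%N, z.
Qed.

Lemma col_main U : invt t U -> Good U.
Proof.
move=> hU; have [_ hR _] := hU.
have [k [z hz]] := lev0 hR.
exact: (colk hU hz).
Qed.

End Col.

Lemma main_ind d : forall (t : nat) U, (t + d = m)%N -> invt t U -> Good U.
Proof.
elim: d => [|d IH] t U htd hU.
  have -> : U = 1%:M.
    apply/matrixP => a b; rewrite mxE; case: hU => _ _ h; apply: h.
    have e : t = m by rewrite -htd addn0.
    by rewrite e ltn_ord.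
  by exists [::]; split.
have ht : (t < m)%N by rewrite -htd; lia.
apply: (@col_main (Ordinal ht)) => //.
move=> U' hU'; apply: (IH t.+1 U') => //.
by rewrite addSnnS.
Qed.

End Rev.
End Main.

Unset Implicit Arguments.

Theorem theorem7p6 (R : realType) (m : nat) (U : 'M[R[i]]_m) :
  (unitary U /\ (forall a b, in_R12 (U a b))) <->
  (exists s : seq 'M[R[i]]_m, (forall G, G \in s -> generator G) /\ U = mx_prod s).
Proof.
split.
  move=> [hU hR]; apply: (@main_ind R m m 0 U) => //.
move=> [s [hs ->]]; have [h1 h2] := prod_props hs.
by split.
Qed.
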